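(* Let $b\ge0$, $c\ge0$, $1\le a\le c+1$, and $f\in\mathbb{F}_q[x_1,\dots,x_c]$. If $\delta_{a;b}(f)$ is a polynomial, then $\delta_{a';b}(f)$ is a polynomial for every integer $1\le a'<a$.
   Context: $q$ is a power of a prime. Delta operators: for integers $b\ge0$, $c\ge0$, $1\le a\le c+1$, $\delta_{a;b}:\mathbb{F}_q(x_1,\dots,x_c)\to\mathbb{F}_q(x_1,\dots,x_{c+1})$ sends $f$ to $N/L(x_1,\dots,x_a)$, where $N$ is the $a\times a$ determinant whose $t$-th row is $(x_1^{q^{t-1}},\dots,x_a^{q^{t-1}})$ for $t=1,\dots,a-1$ and whose last row is $(x_1^{q^b}f(\hat x_1),\dots,x_a^{q^b}f(\hat x_a))$, with $f(\hat x_i)=f(x_1,\dots,x_{i-1},x_{i+1},\dots,x_{c+1})$, and $L(x_1,\dots,x_a)=\det(x_j^{q^{t-1}})_{1\le t,j\le a}$. *)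

(* Defs.v *)
From HB Require Import structures.
From mathcomp Require Import all_boot all_order all_algebra all_field.
From mathcomp Require Import mpoly.
Set Implicit Arguments. Unset Strict Implicit. Unset Printing Implicit Defensive.
Import GRing.Theory.
Local Open Scope ring_scope.

(* F_q is modelled as an arbitrary finite field F; q := #|F|. *)
Definition qF (F : finFieldType) : nat := #|F|.

(* f(\hat x_i) : substitute x_1..x_c by x_1..x_{i-1},x_{i+1},..,x_{c+1}
   (0-indexed: variable j goes to variable lift i j). *)
Definition fhat (F : finFieldType) (c : nat) (i : 'I_c.+1) (f : {mpoly F[c]})
  : {mpoly F[c.+1]} := f \mPo [tuple 'X_(lift i j) | j < c].

(* Column j (0-indexed, j < a <= c+1) uses variable x_{j+1}. *)
Definition var_of (c a : nat) (j : 'I_a) : 'I_c.+1 := inord j.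

Definition Nmx (F : finFieldType) (c a b : nat) (f : {mpoly F[c]})
  : 'M[{mpoly F[c.+1]}]_a :=
  \matrix_(t < a, j < a)
    if (t.+1 < a)%N then 'X_(var_of c j) ^+ (qF F ^ t)%N
    else 'X_(var_of c j) ^+ (qF F ^ b)%N * fhat (var_of c j) f.

Definition Lmx (F : finFieldType) (c a : nat) : 'M[{mpoly F[c.+1]}]_a :=
  \matrix_(t < a, j < a) 'X_(var_of c j) ^+ (qF F ^ t)%N.

Definition delta (F : finFieldType) (c a b : nat) (f : {mpoly F[c]})
  : {fraction {mpoly F[c.+1]}} :=
  FracField.tofrac (\det (Nmx a b f)) / FracField.tofrac (\det (Lmx F c a)).

Definition is_poly (F : finFieldType) (n : nat) (r : {fraction {mpoly F[n]}}) : Prop :=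
  exists g : {mpoly F[n]}, r = FracField.tofrac g.

(* Main.v *)
Require Import Defs.
From HB Require Import structures.
From mathcomp Require Import all_boot all_order all_algebra all_fingroup all_solvable all_field.
From mathcomp Require Import mpoly.
From mathcomp Require Import ring zify.
Set Implicit Arguments. Unset Strict Implicit. Unset Printing Implicit Defensive.
Import GRing.Theory.
Local Open Scope ring_scope.

Section S.
Variable F : finFieldType.
Variable c : nat.
Local Notation n := c.+1.
Local Notation R := {mpoly F[c.+1]}.
Local Notation q := (qF F).

Lemma q_gt1 : (1 < q)%N.
Proof. exact: finNzRing_gt1. Qed.

Lemma frobR (x y : R) t : (x + y) ^+ (q ^ t) = x ^+ (q ^ t) + y ^+ (q ^ t).
Proof.
apply: exprDn_pchar.
have [p pr pc] := finPcharP F.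
have pcR : p \in [pchar R] by rewrite (pchar_lalg R).
have : p.-nat q.
  have := fin_ring_pchar_abelem pc => /abelem_pgroup.
  by rewrite /pgroup cardsT.
move=> pq; rewrite (eq_pnat _ (pcharf_eq pcR)).
rewrite pnatX pq; by case: (t).
Qed.

Lemma frobZ (a : F) (x : R) t : (a *: x) ^+ (q ^ t) = a *: x ^+ (q ^ t).
Proof.
rewrite -mul_mpolyC exprMn -mul_mpolyC; congr (_ * _).
rewrite -rmorphXn /=; congr (_ %:MP).
elim: t => [|t IH]; first by rewrite expr1.
by rewrite expnS mulnC exprM IH expf_card.
Qed.

Lemma frob_sum k (e : 'I_k -> F) (x : 'I_k -> R) t :
  (\sum_(j < k) e j *: x j) ^+ (q ^ t) = \sum_(j < k) e j *: x j ^+ (q ^ t).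
Proof.
elim/big_ind2: _ => //.
- have q0 : q != 0%N by rewrite -lt0n ltnW // q_gt1.
  by rewrite expr0n expn_eq0 (negPf q0).
- by move=> a b u v <- <-; rewrite frobR.
- by move=> j _; rewrite frobZ.
Qed.

Definition Mmon p (g : 'I_p -> 'I_n) : 'X_{1..n} := (\sum_(i < p) U_(g i) *+ (q ^ i))%MM.

Lemma Mmon_eval p (g : 'I_p -> 'I_n) i0 : injective g -> Mmon g (g i0) = (q ^ i0)%N.
Proof.
move=> ig; rewrite /Mmon mnm_sumE (bigD1 i0) //= mulmnE mnm1E eqxx mul1n.
rewrite big1 ?addn0 // => i ni; rewrite mulmnE mnm1E.
by rewrite (inj_eq ig) (negPf ni).
Qed.

Lemma moore_neq0 p (w : 'I_p -> 'I_n) : injective w ->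
  \det (\matrix_(t < p, j < p) ('X_(w j) : R) ^+ (q ^ t)) != 0.
Proof.
move=> iw.
have key : forall s : 'S_p, \prod_(i < p) (\matrix_(t < p, j < p) ('X_(w j) : R) ^+ (q ^ t)) i (s i)
   = 'X_[Mmon (fun i => w (s i))].
  move=> s; rewrite /Mmon -mprodXnE; apply: eq_bigr => i _; by rewrite mxE.
apply/eqP => /(congr1 (mcoeff (Mmon w))).
rewrite mcoeff0 /determinant raddf_sum.
rewrite (eq_bigr (fun s : 'S_p => mcoeff (Mmon w) ((-1) ^+ s * 'X_[Mmon (fun i => w (s i))]))); last first.
  by move=> s _; rewrite key.
rewrite (bigD1 (1%g : 'S_p)) //.
rewrite big1 ?addr0.
  rewrite odd_perm1 expr0 mul1r mcoeffX.
  have -> : Mmon (fun i => w ((1%g : 'S_p) i)) = Mmon w.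
    by rewrite /Mmon; apply: eq_bigr => i _; rewrite perm1.
  rewrite eqxx => H; move: (@oner_neq0 F) => /eqP; apply; rewrite -[RHS]H; exact: (esym (addr0 _)).
move=> s ns.
have ne : Mmon (fun i => w (s i)) != Mmon w.
  apply: contra ns => /eqP E; apply/eqP/permP => i; rewrite perm1.
  have ig : injective (fun i => w (s i)) by move=> x y /iw /perm_inj.
  have := Mmon_eval i ig; rewrite E Mmon_eval // => /(expnI q_gt1) H.
  exact: val_inj.
case: (odd_perm s); rewrite ?expr1 ?expr0 ?mulN1r ?mul1r ?mcoeffN mcoeffX (negPf ne) ?oppr0 //.
Qed.

Definition Xv (j : nat) : R := 'X_(inord j).
Definition MM m (h : nat -> R) : 'M[R]_m :=
  \matrix_(t < m, j < m) if (t.+1 < m)%N then Xv j ^+ (q ^ t) else h j.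
Notation sub k v :=
  (comp_mpoly [tuple if i == inord k then v else 'X_i | i < n] : R -> R).
Definition V k (e : nat -> F) : R := \sum_(j < k) e j *: Xv j.

Lemma inord_eq j k : (j < n)%N -> (k < n)%N -> (inord j == inord k :> 'I_n) = (j == k).
Proof.
move=> jn kn; apply/eqP/eqP => [/(congr1 val)|->//].
by rewrite /= !inordK.
Qed.

Lemma Xv_inj j k : (j < n)%N -> (k < n)%N -> Xv j = Xv k -> j = k.
Proof.
move=> jn kn /(congr1 (mcoeff U_(inord k))); rewrite /Xv !mcoeffXU eqxx.
case: eqP => [/(congr1 val)|]; first by rewrite /= !inordK.
by move=> _ /eqP; rewrite eq_sym oner_eq0.
Qed.

Lemma sub_Xv k v j : (j < n)%N -> (k < n)%N -> sub k v (Xv j) = if j == k then v else Xv j.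
Proof.
move=> jn kn; rewrite /Xv comp_mpolyXU -tnth_nth tnth_map tnth_ord_tuple.
by rewrite inord_eq.
Qed.

Lemma colA m (h : nat -> R) k (e : nat -> F) : (m <= n)%N -> (k < m)%N ->
  exists2 C : R, C != 0 &
    sub k (V k e) (\det (MM m h)) = C * sub k (V k e) (h k - \sum_(j < k) e j *: h j).
Proof.
case: m => // m mn km.
set s := sub k (V k e).
have kn : (k < n)%N by apply: leq_trans mn.
pose Aent (t j : nat) : R := if (t.+1 < m.+1)%N then
   (if j == k then V k e ^+ (q ^ t) else Xv j ^+ (q ^ t)) else s (h j).
pose A : 'M[R]_m.+1 := map_mx s (MM m.+1 h).
have EA : forall t j : 'I_m.+1, A t j = Aent t j.
  move=> t j; rewrite /A /Aent !mxE; case: ifP => _ //.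
  by rewrite /s rmorphXn /= sub_Xv //; [case: eqP | apply: leq_trans mn].
have detA : s (\det (MM m.+1 h)) = \det A by rewrite /A det_map_mx.
set d := s (h k - \sum_(j < k) e j *: h j).
pose kk : 'I_m.+1 := inord k.
have kkE : (kk : nat) = k by rewrite inordK.
pose A' : 'M[R]_m.+1 := \matrix_(t, j) if j == kk then (if t == ord_max then d else 0) else A t j.
pose E0 : 'M[R]_m.+1 := \matrix_(i, j) (((j == kk) && (i < k)%N)%:R * (e i)%:MP).
have AE : A = A' *m (1%:M + E0).
  rewrite mulmxDr mulmx1; apply/matrixP => t j.
  rewrite EA [RHS]mxE [A' t j]mxE [(A' *m E0) t j]mxE.
  case: eqP => [->|nj]; last first.
    rewrite EA big1 ?addr0 // => i _; rewrite mxE.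
    by rewrite [E0 i j]mxE; move/eqP/negPf: nj => ->; rewrite /= mul0r mulr0.
  have -> : \sum_i A' t i * E0 i kk = \sum_(i < k) Aent t i * (e i)%:MP.
    rewrite (big_ord_widen m.+1 (fun i => Aent t i * (e i)%:MP) (ltnW km)) [RHS]big_mkcond.
    apply: eq_bigr => i _; rewrite !mxE eqxx /=; case ik : (i < k)%N; rewrite /= ?mulr0n ?mulr1n ?mul0r ?mulr0 ?mul1r //.
    have -> : (i == kk) = false.
      by apply/negP => /eqP ie; rewrite ie kkE ltnn in ik.
    rewrite /Aent; case: ifP => _ //; rewrite /s rmorphXn /= sub_Xv //; last exact: (leq_trans (ltn_ord i) mn).
    by have -> : ((i : nat) == k) = false by apply/negP => /eqP ie; rewrite ie ltnn in ik.
  rewrite kkE; case: (unliftP ord_max t) => [t'|] ->.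
    have -> : (lift ord_max t' == ord_max) = false.
      by apply/negP => /eqP E; move: (neq_lift ord_max t'); rewrite E eqxx.
    rewrite add0r /Aent lift_max ltnS ltn_ord eqxx frob_sum.
    apply: eq_bigr => i _.
    have -> : ((i : nat) == k) = false by apply/negP => /eqP ie; move: (ltn_ord i); rewrite ie ltnn.
    by rewrite mulrC mul_mpolyC.
  have -> : ((ord_max : 'I_m.+1) == ord_max) = true by apply/eqP.
  rewrite /Aent ltnn /d /s raddfB (raddf_sum (comp_mpoly [tuple if i == inord k then V k e else 'X_i | i < n])).
  rewrite -[X in X = _]addr0 -addrA; congr (_ + _).
  rewrite addrC; apply/esym/eqP; rewrite subr_eq0; apply/eqP; apply: eq_bigr => i _.
  by rewrite /= comp_mpolyZ mulrC mul_mpolyC.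
have detE : \det (1%:M + E0 : 'M[R]_m.+1) = 1.
  rewrite -det_tr det_trig; last first.
    apply/is_trig_mxP => i j ij; rewrite !mxE.
    have -> : (j == i) = false by apply/negP => /eqP ji; rewrite ji ltnn in ij.
    have -> : (i == kk) && (j < k)%N = false.
      apply/negP => /andP [/eqP ik jk]; rewrite ik kkE in ij.
      by move: (ltn_trans ij jk); rewrite ltnn.
    by rewrite mul0r addr0.
  apply: big1 => i _; rewrite !mxE eqxx.
  have -> : (i == kk) && (i < k)%N = false.
    by apply/negP => /andP [/eqP ik]; rewrite ik kkE ltnn.
  by rewrite mul0r addr0.
have detA' : \det A' = d * cofactor A' ord_max kk.
  rewrite (expand_det_col A' kk) (bigD1 ord_max) // big1 /=; last by move=> i ni; rewrite mxE eqxx (negPf ni) mul0r.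
  by rewrite addr0 mxE !eqxx.
pose w : 'I_m -> 'I_n := fun j => inord (lift kk j).
have iw : injective w.
  move=> x y /(congr1 val) /=; rewrite !inordK ?(leq_trans (ltn_ord _) mn) //.
  by move/val_inj/lift_inj.
exists ((-1) ^+ ((ord_max : 'I_m.+1) + kk)%N * \det (\matrix_(t < m, j < m) ('X_(w j) : R) ^+ (q ^ t))).
  apply: mulf_neq0; first by rewrite signr_eq0.
  exact: moore_neq0.
have subE : row' ord_max (col' kk A') = \matrix_(t < m, j < m) ('X_(w j) : R) ^+ (q ^ t).
  apply/matrixP => t j; rewrite !mxE eq_sym (negPf (neq_lift kk j)) lift_max ltnS ltn_ord.
  rewrite /s rmorphXn /= sub_Xv //; last exact: (leq_trans (ltn_ord (lift kk j)) mn).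
  have -> : ((lift kk j : nat) == k) = false.
    apply/negP => /eqP E; move: (neq_lift kk j); rewrite eq_sym => /eqP; apply.
    by apply: ord_inj; rewrite E kkE.
  by [].
by rewrite detA AE det_mulmx detE mulr1 detA' mulrC /cofactor subE.
Qed.

Definition lin k (e : nat -> F) : R := Xv k - V k e.

Lemma sub_div k v (p : R) : (k < n)%N -> exists w, p - sub k v p = (Xv k - v) * w.
Proof.
move=> kn.
pose P (p : R) := exists w, p - sub k v p = (Xv k - v) * w.
have PM : forall a b, P a -> P b -> P (a * b).
  move=> a b [u Hu] [w Hw]; exists (a * w + sub k v b * u).
  have -> : (Xv k - v) * (a * w + sub k v b * u) = a * ((Xv k - v) * w) + sub k v b * ((Xv k - v) * u) by ring.
  rewrite -Hu -Hw rmorphM /=; ring.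
have PD : forall a b, P a -> P b -> P (a + b).
  move=> a b [u Hu] [w Hw]; exists (u + w).
  by rewrite raddfD /= mulrDr -Hu -Hw opprD !addrA [_ - _ + b]addrAC.
have PZ : forall (cc : F) a, P a -> P (cc *: a).
  move=> cc a [u Hu]; exists (cc *: u).
  by rewrite comp_mpolyZ -scalerBr Hu scalerAr.
have P1 : P 1 by exists 0; rewrite rmorph1 subrr mulr0.
have PX : forall i, P 'X_i.
  move=> i; rewrite /P comp_mpolyXU -tnth_nth tnth_map tnth_ord_tuple.
  case: eqP => [->|_]; first by exists 1; rewrite mulr1.
  by exists 0; rewrite subrr mulr0.
have PXm : forall m, P 'X_[m].
  move=> m; rewrite mpolyXE_id; elim/big_ind: _ => //.
  move=> i _; elim: (m i) => [|j IH]; first by rewrite expr0.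
  by rewrite exprS; apply: PM.
elim/mpolyind: p => [|cc m p _ _ Hp]; first by exists 0; rewrite raddf0 subrr mulr0.
by apply: PD => //; apply: PZ.
Qed.

Definition fe k (ee : {ffun 'I_k -> F}) : nat -> F :=
  fun j => if insub j is Some j' then ee j' else 0.
Lemma feE k ee (j : 'I_k) : fe ee j = ee j.
Proof. by rewrite /fe valK. Qed.

Definition Lk k := \prod_(ee : {ffun 'I_k -> F}) lin k (fe ee).
Definition D m := \prod_(k < m) Lk k.

Lemma coef_V k e i : (k <= n)%N -> (i < n)%N ->
  mcoeff U_(inord i) (V k e) = if (i < k)%N then e i else 0.
Proof.
move=> kn iN; rewrite /V raddf_sum.
under eq_bigr => j _ do rewrite /= mcoeffZ /Xv mcoeffXU inord_eq ?(leq_trans (ltn_ord j) kn) //.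
case: ifP => ik.
  rewrite (bigD1 (Ordinal ik)) //= eqxx mulr1 big1 ?addr0 // => j nj.
  case: eqP => [ji|]; last by rewrite mulr0.
  by case/eqP: nj; apply: val_inj.
rewrite big1 // => j _; case: eqP => [ji|]; last by rewrite mulr0.
by move: (ltn_ord j); rewrite ji ik.
Qed.

Lemma V_inj k (e e' : {ffun 'I_k -> F}) : (k <= n)%N -> V k (fe e) = V k (fe e') -> e = e'.
Proof.
move=> kn E; apply/ffunP => j; move: (congr1 (mcoeff U_(inord j)) E).
by rewrite !coef_V ?ltn_ord ?(leq_trans (ltn_ord j) kn) // !feE.
Qed.

Lemma coef_lin k e : (k < n)%N -> mcoeff U_(inord k) (lin k e) = 1.
Proof.
move=> kn; rewrite /lin mcoeffB coef_V ?ltnn ?subr0 //; last exact: ltnW.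
by rewrite /Xv mcoeffXU eqxx.
Qed.

Lemma lin_neq0 k e : (k < n)%N -> lin k e != 0.
Proof.
move=> kn; apply/eqP => E; move: (coef_lin e kn); rewrite E mcoeff0 => /eqP.
by rewrite eq_sym oner_eq0.
Qed.

Lemma D_neq0 m : (m <= n)%N -> D m != 0.
Proof.
move=> mn; apply/prodf_neq0 => k _; apply/prodf_neq0 => ee _.
exact: lin_neq0 (leq_trans (ltn_ord k) mn).
Qed.

Lemma sub_V k v k' e : (k' <= k)%N -> (k < n)%N -> sub k v (V k' e) = V k' e.
Proof.
move=> kk kn; rewrite /V (raddf_sum (comp_mpoly [tuple if i == inord k then v else 'X_i | i < n])).
apply: eq_bigr => j _ /=; rewrite comp_mpolyZ sub_Xv //; last exact: (leq_trans (ltn_ord j) (leq_trans kk (ltnW kn))).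
by have -> : ((j : nat) == k) = false by apply/negP => /eqP je; move: (leq_trans (ltn_ord j) kk); rewrite je ltnn.
Qed.

Lemma sub_lin k v k' e : (k' < k)%N -> (k < n)%N -> sub k v (lin k' e) = lin k' e.
Proof.
move=> kk kn; rewrite /lin raddfB /= sub_V ?(ltnW kk) // sub_Xv //; last exact: ltn_trans kn.
by rewrite (ltn_eqF kk).
Qed.

Lemma sub_D k v m : (m <= k)%N -> (k < n)%N -> sub k v (D m) = D m.
Proof.
move=> mk kn; rewrite /D rmorph_prod; apply: eq_bigr => k' _.
rewrite /Lk rmorph_prod; apply: eq_bigr => ee _ /=.
by rewrite sub_lin // (leq_trans (ltn_ord k') mk).
Qed.

Lemma prod_div m (w : R) (s : seq {ffun 'I_m -> F}) : (m < n)%N -> uniq s ->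
  (forall ee, ee \in s -> sub m (V m (fe ee)) w = 0) ->
  exists u, w = \prod_(ee <- s) lin m (fe ee) * u.
Proof.
move=> mn; elim: s w => [|ee0 s IH] w /=.
  by move=> _ _; exists w; rewrite big_nil mul1r.
move=> /andP [ns us] Z.
have [w' Hw'] := sub_div (V m (fe ee0)) w mn.
move: Hw'; rewrite Z ?mem_head // subr0 => Ew.
have Z' : forall ee, ee \in s -> sub m (V m (fe ee)) w' = 0.
  move=> ee es; have := Z ee; rewrite in_cons es orbT => /(_ isT).
  rewrite Ew rmorphM /= => /eqP; rewrite mulf_eq0 => /orP [|/eqP //].
  rewrite raddfB /= sub_Xv // eqxx sub_V // subr_eq0 => /eqP E.
  move/V_inj: E => /(_ (ltnW mn)) Ee.
  by move: ns; rewrite -Ee es.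
have [u Hu] := IH w' us Z'.
by exists u; rewrite Ew Hu big_cons mulrA.
Qed.

Lemma D_div m p : (m <= n)%N ->
  (forall k, (k < m)%N -> forall ee : {ffun 'I_k -> F}, sub k (V k (fe ee)) p = 0) ->
  exists u, p = D m * u.
Proof.
elim: m p => [|m IH] p mn Z; first by exists p; rewrite /D big_ord0 mul1r.
have [w Hw] := IH p (ltnW mn) (fun k km => Z k (ltnW km)).
have Zw : forall ee, ee \in index_enum {ffun 'I_m -> F} -> sub m (V m (fe ee)) w = 0.
  move=> ee _; have := Z m (ltnSn m) ee; rewrite Hw rmorphM /= sub_D //.
  by move/eqP; rewrite mulf_eq0 (negPf (D_neq0 (ltnW mn))) /= => /eqP.
have [u Hu] := prod_div mn (index_enum_uniq _) Zw.
exists u; rewrite Hw Hu /D big_ord_recr /= -mulrA; congr (_ * (_ * _)).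
Qed.

Lemma msizeXv j : msize (Xv j) = 2.
Proof. by rewrite /Xv msizeX mdeg1. Qed.

Lemma msize_V k e : (msize (V k e) <= 2)%N.
Proof.
rewrite /V; apply: leq_trans; first exact: msize_sum.
apply/bigmax_leqP => j _.
by apply: leq_trans (msizeZ_le _ _) _; rewrite msizeXv.
Qed.

Lemma msize_lin k e : (k < n)%N -> msize (lin k e) = 2.
Proof.
move=> kn; apply/anti_leq/andP; split.
  apply: leq_trans (msizeD_le _ _) _; rewrite geq_max msizeXv msizeN msize_V //.
rewrite ltnNge; apply/negP => /msize1_polyC E.
move: (coef_lin e kn); rewrite E mcoeffC.
have -> : ((U_(inord k))%MM == 0%MM :> 'X_{1..n}) = false.
  apply/negP => /eqP /(congr1 mdeg); rewrite mdeg1 mdeg0 => //.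
by rewrite mulr0 => /eqP; rewrite eq_sym oner_eq0.
Qed.

Lemma msize_prod_lin k (r : seq (nat -> F)) : (k < n)%N ->
  msize (\prod_(e <- r) lin k e) = (size r).+1.
Proof.
move=> kn; elim: r => [|x r IH]; first by rewrite big_nil msize1.
rewrite big_cons msizeM ?lin_neq0 //; last first.
  by rewrite -msize_poly_eq0 IH.
by rewrite msize_lin // IH.
Qed.

Lemma msize_D m : (m <= n)%N -> msize (D m) = (\sum_(k < m) q ^ k).+1.
Proof.
elim: m => [|m IH] mn; first by rewrite /D !big_ord0 msize1.
rewrite /D big_ord_recr /= msizeM ?D_neq0 ?(ltnW mn) //; last first.
  by apply/prodf_neq0 => ee _; apply: lin_neq0.
rewrite -/(D m) IH ?(ltnW mn) // /Lk.
have -> : \prod_(ee : {ffun 'I_m -> F}) lin m (fe ee) =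
   \prod_(x <- [seq fe ee | ee <- index_enum {ffun 'I_m -> F}]) lin m x.
  by rewrite big_map.
rewrite msize_prod_lin //.
rewrite size_map big_ord_recr /=.
have -> : size (index_enum {ffun 'I_m -> F}) = (q ^ m)%N.
  by rewrite [index_enum _]unlock -enumT -cardT card_ffun card_ord.
by rewrite addnS.
Qed.

Definition xpow m (j : nat) : R := Xv j ^+ (q ^ m.-1).

Lemma MM_xpow m : MM m (xpow m) = \matrix_(t < m, j < m) Xv j ^+ (q ^ t).
Proof.
apply/matrixP => t j; rewrite !mxE; case: ifP => // tm.
move: (ltn_ord t) tm => tl /negbT; rewrite -leqNgt => tg.
have -> : (nat_of_ord t) = m.-1 by lia.
by [].
Qed.

Lemma moore_neq0' m : (m <= n)%N -> \det (MM m (xpow m)) != 0.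
Proof.
move=> mn; rewrite MM_xpow.
have iw : injective (fun j : 'I_m => (inord j : 'I_n)).
  move=> x y /(congr1 val) /=; rewrite !inordK ?(leq_trans (ltn_ord _) mn) //.
  exact: val_inj.
exact: (moore_neq0 iw).
Qed.

Lemma msize_moore m : (m <= n)%N -> (msize (\det (MM m (xpow m))) <= (\sum_(t < m) q ^ t).+1)%N.
Proof.
move=> mn; rewrite MM_xpow /determinant.
apply: leq_trans; first exact: msize_sum.
apply/bigmax_leqP => s _.
have -> : \prod_(i < m) (\matrix_(t < m, j < m) Xv j ^+ (q ^ t)) i (s i) =
   'X_[Mmon (fun i => (inord (s i) : 'I_n))].
  by rewrite /Mmon -mprodXnE; apply: eq_bigr => i _; rewrite mxE.
have H : (msize ('X_[Mmon (fun i => (inord (s i) : 'I_n))] : R) <= (\sum_(t < m) q ^ t).+1)%N.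
  rewrite msizeX /Mmon mdeg_sum ltnS; apply: eq_leq; apply: eq_bigr => i _.
  by rewrite mdegMn mdeg1 mul1n.
by case: (odd_perm s); rewrite ?expr1 ?expr0 ?mulN1r ?mul1r ?msizeN.
Qed.

Lemma Z_L m k (e : nat -> F) : (m <= n)%N -> (k < m)%N -> sub k (V k e) (\det (MM m (xpow m))) = 0.
Proof.
move=> mn km; have kn : (k < n)%N := leq_trans km mn.
have [C _ ->] := colA (xpow m) e mn km.
rewrite /xpow -frob_sum rmorphB /= !rmorphXn /= sub_Xv // eqxx sub_V //.
by rewrite subrr mulr0.
Qed.

Lemma L_div m p : (m <= n)%N ->
  (forall k, (k < m)%N -> forall ee : {ffun 'I_k -> F}, sub k (V k (fe ee)) p = 0) ->
  exists u, p = \det (MM m (xpow m)) * u.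
Proof.
move=> mn Z.
have [w Hw] := D_div mn Z.
have [u0 Hu0] := D_div mn (fun k km ee => Z_L (fe ee) mn km).
have Lnz := moore_neq0' mn.
have u0nz : u0 != 0 by apply: contra Lnz => /eqP u0z; rewrite Hu0 u0z mulr0.
have Dnz := D_neq0 mn.
have : (msize u0 <= 1)%N.
  have := msize_moore mn; rewrite Hu0 msizeM // msize_D //.
  move: (msize u0) => k; case: k => [|k] //=; rewrite addnS /= ltnS => H.
  by rewrite ltnS; move: H; rewrite -{2}[(\sum_(t < m) q ^ t)%N]addn0 leq_add2l.
move/msize1_polyC => u0E.
have cnz : u0@_0 != 0 by apply: contra u0nz => /eqP cz; rewrite u0E cz.
set c0 := u0@_0 in u0E cnz *.
exists (c0^-1%:MP * w).
rewrite Hu0 u0E {1}Hw -mulrA; congr (_ * _).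
by rewrite mulrA -mpolyCM mulfV // mul1r.
Qed.

Definition gg b (f : {mpoly F[c]}) (j : nat) : R := Xv j ^+ (q ^ b) * fhat (inord j) f.

Lemma Nmx_MM a b (f : {mpoly F[c]}) : Nmx a b f = MM a (gg b f).
Proof. by apply/matrixP => t j; rewrite !mxE. Qed.

Lemma Lmx_MM a : Lmx F c a = MM a (xpow a).
Proof. by rewrite MM_xpow; apply/matrixP => t j; rewrite !mxE. Qed.

Lemma main_aux a b (f : {mpoly F[c]}) : (1 <= a <= n)%N -> is_poly (delta a b f) ->
  forall a' : nat, (1 <= a')%N -> (a' < a)%N -> is_poly (delta a' b f).
Proof.
move=> /andP [a1 an] [g0 Hg] a' _ aa.
have a'n : (a' <= n)%N by apply: leq_trans (ltnW aa) an.
move: Hg; rewrite /delta Nmx_MM Lmx_MM => Hg.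
have Lnz := moore_neq0' an.
have NE : \det (MM a (gg b f)) = g0 * \det (MM a (xpow a)).
  apply/eqP; rewrite -tofrac_eq tofracM -Hg mulfVK // tofrac_eq0 //.
have Z : forall k, (k < a')%N -> forall ee : {ffun 'I_k -> F},
    sub k (V k (fe ee)) (\det (MM a' (gg b f))) = 0.
  move=> k ka ee; have ka0 : (k < a)%N := ltn_trans ka aa.
  have [C Cnz HC] := colA (gg b f) (fe ee) an ka0.
  have [C' C'nz ->] := colA (gg b f) (fe ee) a'n ka.
  have : sub k (V k (fe ee)) (\det (MM a (gg b f))) = 0.
    by rewrite NE rmorphM /= Z_L // mulr0.
  by rewrite HC => /eqP; rewrite mulf_eq0 (negPf Cnz) /= => /eqP ->; rewrite mulr0.
have [u Hu] := L_div a'n Z.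
exists u; rewrite /delta Nmx_MM Lmx_MM Hu tofracM mulrAC mulfV ?mul1r //.
by rewrite tofrac_eq0 moore_neq0'.
Qed.
End S.

Theorem mainTheorem10 (F : finFieldType) (b c a : nat) (f : {mpoly F[c]}) :
  (1 <= a <= c.+1)%N ->
  is_poly (delta a b f) ->
  forall a' : nat, (1 <= a')%N -> (a' < a)%N -> is_poly (delta a' b f).
Proof. exact: main_aux. Qed.
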